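(* Let $G$ be a digraph with a fixed upward planar drawing and let $s,t\in V(G)$ be such that there is a directed path from $s$ to $t$. Then there is a unique right-most $s$-$t$ path in $G$.
   Context: An upward planar drawing of a digraph is a plane drawing (no edge crossings) in which every directed edge is a curve monotone increasing in the $y$-direction from tail to head. A path is identified with the set of points of $\mathbb{R}^2$ in its drawing. For a path $P$ with endpoints $(x,y)$, $(x',y')$, $y\le y'$, let $\mathrm{Right}(P):=\{(u,v)\in\mathbb{R}^2: y\le v\le y',\ u'<u \text{ for all } u' \text{ with } (u',v)\in P\}$. A right-most $s$-$t$ path is a directed $s$-$t$ path $P$ such that for all directed $s$-$t$ paths $P'$, $P\subseteq P'\cup\mathrm{Right}(P')$. *)

(* Defs.v *)
From Stdlib Require Import Reals.
From mathcomp Require Import all_boot.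

Set Implicit Arguments.
Unset Strict Implicit.
Unset Printing Implicit Defensive.
Local Open Scope R_scope.

(* Points of the plane R^2: (x-coordinate, y-coordinate). *)
Definition point := (R * R)%type.

Definition in01 (a : R) : Prop := (0 <= a <= 1).

(* A drawing consists of vertex positions  pos : V -> point  and, for each
   edge x -> y, a curve  crv x y : R -> point  (parametrised on [0,1];
   the values outside [0,1] are irrelevant, we only ask continuity). *)
Definition upward_planar_drawing (V : finType) (E : rel V)
    (pos : V -> point) (crv : V -> V -> R -> point) : Prop :=
  injective pos /\
  (forall x y, E x y ->
     crv x y 0 = pos x /\ crv x y 1 = pos y /\
     (forall a, continuity_pt (fun b => fst (crv x y b)) a /\
                continuity_pt (fun b => snd (crv x y b)) a) /\
     (forall a b, (0 <= a) -> (a < b) -> (b <= 1) ->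
        (snd (crv x y a) < snd (crv x y b)))) /\
  (forall x y w a, E x y -> (0 < a < 1) -> crv x y a <> pos w) /\
  (forall x y x' y' a b, E x y -> E x' y' -> (x, y) <> (x', y') ->
     in01 a -> in01 b -> crv x y a = crv x' y' b ->
     exists w, crv x y a = pos w /\ (w = x \/ w = y) /\ (w = x' \/ w = y')).

(* A directed path x :: p (vertex sequence starting at x) from s to t:
   consecutive vertices are joined by edges, no repeated vertex. *)
Definition dipath (V : finType) (E : rel V) (s t : V) (p : seq V) : Prop :=
  path E s p /\ last s p = t /\ uniq (s :: p).

Fixpoint path_pts (V : finType) (pos : V -> point) (crv : V -> V -> R -> point)
    (x : V) (p : seq V) : point -> Prop :=
  match p with
  | [::] => fun z => z = pos x
  | y :: p' => fun z => (exists a, in01 a /\ z = crv x y a) \/ path_pts pos crv y p' z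
  end.

Definition Right_of (P : point -> Prop) (lo hi : R) : point -> Prop :=
  fun z => (lo <= snd z <= hi) /\
           (forall u', P (u', snd z) -> (u' < fst z)).

Definition Right_path (V : finType) (pos : V -> point) (crv : V -> V -> R -> point)
    (s t : V) (p : seq V) : point -> Prop :=
  Right_of (path_pts pos crv s p)
           (Rmin (snd (pos s)) (snd (pos t))) (Rmax (snd (pos s)) (snd (pos t))).

Definition rightmost (V : finType) (E : rel V) (pos : V -> point)
    (crv : V -> V -> R -> point) (s t : V) (p : seq V) : Prop :=
  dipath E s t p /\
  forall p', dipath E s t p' ->
    forall z, path_pts pos crv s p z ->
      path_pts pos crv s p' z \/ Right_path pos crv s t p' z.

(* Main.v *)
Require Import Defs.
From Stdlib Require Import Reals.
From mathcomp Require Import all_boot.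
From Stdlib Require Import Lra ClassicalEpsilon Classical.
Set Implicit Arguments.
Unset Strict Implicit.
Unset Printing Implicit Defensive.
Local Open Scope R_scope.

Lemma dr_edge (V : finType) (E : rel V) pos crv (Hd : upward_planar_drawing E pos crv) x y :
  E x y -> crv x y 0 = pos x /\ crv x y 1 = pos y /\
  continuity (fun b => snd (crv x y b)) /\ continuity (fun b => fst (crv x y b)) /\
  (forall a b, 0 <= a -> a < b -> b <= 1 -> snd (crv x y a) < snd (crv x y b)).
Proof.
move=> Exy; case: Hd => _ [H _]; case: (H x y Exy) => [H0 [H1 [Hc Hm]]].
do 2 (split => //); split; [move=> a; exact: (proj2 (Hc a))|split; [move=> a; exact: (proj1 (Hc a))|exact Hm]].
Qed.

Lemma edge_lt (V : finType) (E : rel V) pos crv (Hd : upward_planar_drawing E pos crv) x y :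
  E x y -> snd (pos x) < snd (pos y).
Proof.
move=> Exy; case: (dr_edge Hd Exy) => [H0 [H1 [_ [_ Hm]]]].
rewrite -H0 -H1; apply: Hm; lra.
Qed.

Lemma edge_inj (V : finType) (E : rel V) pos crv (Hd : upward_planar_drawing E pos crv) x y a b :
  E x y -> in01 a -> in01 b -> snd (crv x y a) = snd (crv x y b) -> a = b.
Proof.
move=> Exy [Ha1 Ha2] [Hb1 Hb2] He; case: (dr_edge Hd Exy) => [_ [_ [_ [_ Hm]]]].
case: (Rtotal_order a b) => [h|[h|h]] //.
- have := Hm a b Ha1 h Hb2; lra.
- have := Hm b a Hb1 h Ha2; lra.
Qed.

Lemma edge_height (V : finType) (E : rel V) pos crv (Hd : upward_planar_drawing E pos crv) x y a :
  E x y -> in01 a -> snd (pos x) <= snd (crv x y a) <= snd (pos y).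
Proof.
move=> Exy [Ha1 Ha2]; case: (dr_edge Hd Exy) => [H0 [H1 [_ [_ Hm]]]].
rewrite -H0 -H1; split.
- case: (Rle_lt_or_eq_dec 0 a Ha1) => h; [left; apply: Hm; lra| rewrite -h; lra].
- case: (Rle_lt_or_eq_dec a 1 Ha2) => h; [left; apply: Hm; lra| rewrite h; lra].
Qed.

Lemma path_Ylt (V : finType) (E : rel V) pos crv (Hd : upward_planar_drawing E pos crv) s p :
  path E s p -> forall v, v \in p -> snd (pos s) < snd (pos v).
Proof.
elim: p s => [|x p IH] s //= /andP [Esx Hp] v.
rewrite in_cons => /orP [/eqP ->|Hv]; first exact: (edge_lt Hd Esx).
apply: Rlt_trans (edge_lt Hd Esx) (IH _ Hp _ Hv).
Qed.

Lemma last_Ylt (V : finType) (E : rel V) pos crv (Hd : upward_planar_drawing E pos crv) s p :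
  path E s p -> p <> [::] -> snd (pos s) < snd (pos (last s p)).
Proof.
case: p => [|x p] // Hp _; apply: (path_Ylt Hd Hp).
by rewrite /= mem_last.
Qed.

Lemma last_Yle (V : finType) (E : rel V) pos crv (Hd : upward_planar_drawing E pos crv) s p :
  path E s p -> snd (pos s) <= snd (pos (last s p)).
Proof.
case: p => [|x p] Hp; first by right.
by left; apply: (last_Ylt Hd Hp).
Qed.

Lemma path_uniq (V : finType) (E : rel V) pos crv (Hd : upward_planar_drawing E pos crv) s p :
  path E s p -> uniq (s :: p).
Proof.
elim: p s => [|x p IH] s //= /andP [Esx Hp].
apply/andP; split; last exact: IH.
apply/negP => Hs; have := path_Ylt Hd (s:=s) (p:=x::p); rewrite /= Esx Hp => H.
have := H isT s Hs; lra.
Qed.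


Lemma pts_start (V : finType) (E : rel V) pos crv (Hd : upward_planar_drawing E pos crv) s p :
  path E s p -> path_pts pos crv s p (pos s).
Proof.
case: p => [|x p] //= /andP [Esx _]; left; exists 0; split; first (split; lra).
by case: (dr_edge Hd Esx) => ->.
Qed.

Lemma pts_last (V : finType) (E : rel V) pos crv (Hd : upward_planar_drawing E pos crv) s p :
  path E s p -> path_pts pos crv s p (pos (last s p)).
Proof.
elim: p s => [|x p IH] s //= /andP [Esx Hp]; right; exact: IH.
Qed.

Lemma pts_height (V : finType) (E : rel V) pos crv (Hd : upward_planar_drawing E pos crv) s p z :
  path E s p -> path_pts pos crv s p z -> snd (pos s) <= snd z <= snd (pos (last s p)).
Proof.
elim: p s => [|x p IH] s /=; first by move=> _ ->; lra.
move=> /andP [Esx Hp] [[a [Ha ->]]|Hz].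
- have := edge_height Hd Esx Ha; have := last_Yle Hd Hp; lra.
- have := IH _ Hp Hz; have := edge_lt Hd Esx; lra.
Qed.

Lemma pts_at_start (V : finType) (E : rel V) pos crv (Hd : upward_planar_drawing E pos crv) s p z :
  path E s p -> path_pts pos crv s p z -> snd z = snd (pos s) -> z = pos s.
Proof.
case: p => [|x p] /=; first by [].
move=> /andP [Esx Hp] [[a [Ha ->]]|Hz] Hh.
- case: (dr_edge Hd Esx) => [H0 _].
  have Ha0 : a = 0.
    apply: (edge_inj Hd Esx Ha); first (split; lra). by rewrite H0.
  by rewrite Ha0.
- have := pts_height Hd Hp Hz; have := edge_lt Hd Esx; lra.
Qed.

Lemma pts_uniq (V : finType) (E : rel V) pos crv (Hd : upward_planar_drawing E pos crv) s p z z' :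
  path E s p -> path_pts pos crv s p z -> path_pts pos crv s p z' -> snd z = snd z' -> z = z'.
Proof.
elim: p s => [|x p IH] s /=; first by move=> _ -> ->.
move=> /andP [Esx Hp].
have Hend : forall a, in01 a -> snd (crv s x a) = snd (pos x) -> crv s x a = pos x.
  move=> a Ha Hh; case: (dr_edge Hd Esx) => [_ [H1 _]].
  have -> : a = 1 by apply: (edge_inj Hd Esx Ha); [split; lra| rewrite H1].
  done.
move=> [[a [Ha ->]]|Hz] [[b [Hb ->]]|Hz'] Hh.
- by rewrite (edge_inj Hd Esx Ha Hb Hh).
- have := edge_height Hd Esx Ha; have := pts_height Hd Hp Hz' => H1 H2.
  have Hx : snd z' = snd (pos x) by lra.
  rewrite (pts_at_start Hd Hp Hz' Hx) Hend //; lra.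
- have := edge_height Hd Esx Hb; have := pts_height Hd Hp Hz => H1 H2.
  have Hx : snd z = snd (pos x) by lra.
  rewrite (pts_at_start Hd Hp Hz Hx) Hend //; lra.
- exact: IH Hp Hz Hz' Hh.
Qed.

Lemma pts_at_end (V : finType) (E : rel V) pos crv (Hd : upward_planar_drawing E pos crv) s p z :
  path E s p -> path_pts pos crv s p z -> snd z = snd (pos (last s p)) -> z = pos (last s p).
Proof.
move=> Hp Hz Hh; exact: (pts_uniq Hd Hp Hz (pts_last Hd Hp) Hh).
Qed.

Lemma pts_cat (V : finType) (E : rel V) pos crv (Hd : upward_planar_drawing E pos crv) s a b z :
  path E s (a ++ b) ->
  (path_pts pos crv s (a ++ b) z <-> path_pts pos crv s a z \/ path_pts pos crv (last s a) b z).
Proof.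
elim: a s => [|x a IH] s.
- move=> Hp; split; [by right| case=> [Hz|//]]. rewrite Hz. exact: (pts_start Hd Hp).
- rewrite /= => /andP [Esx Hp]; rewrite (IH _ Hp); tauto.
Qed.

Lemma pts_edge (V : finType) (E : rel V) pos crv (Hd : upward_planar_drawing E pos crv) s p z :
  path E s p -> path_pts pos crv s p z -> p <> [::] ->
  exists x y a p1 p2, s :: p = p1 ++ x :: y :: p2 /\ E x y /\ in01 a /\ z = crv x y a.
Proof.
elim: p s => [|x p IH] s //= /andP [Esx Hp] [[a [Ha ->]]|Hz] _.
- by exists s, x, a, [::], p; split=> //; split.
- case: p IH Hp Hz => [|y p] IH Hp Hz.
  + exists s, x, 1, [::], [::]; split=> //; split=> //; split; first (split; lra).
    rewrite Hz; by case: (dr_edge Hd Esx) => _ [-> _].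
  + have [x' [y' [a [p1 [p2 [Heq [He [Ha Hz']]]]]]]] := IH x Hp Hz ltac:(done).
    exists x', y', a, (s :: p1), p2; by rewrite Heq; split.
Qed.

Definition clampR (c d h : R) := Rmax c (Rmin h d).

Lemma clampR_spec c d h : c < d ->
  c <= clampR c d h <= d /\ (h <= c -> clampR c d h = c) /\ (d <= h -> clampR c d h = d) /\
  (c <= h <= d -> clampR c d h = h) /\ (c < h -> clampR c d h <= h) /\ (h < d -> h <= clampR c d h).
Proof.
move=> Hcd; rewrite /clampR /Rmax /Rmin.
case: (Rle_dec h d) => H1; case: (Rle_dec c h) => H2; case: (Rle_dec c d) => H3; lra.
Qed.

Lemma clampR_mono c d h h' : c < d -> h <= h' -> clampR c d h <= clampR c d h'.
Proof.
move=> Hcd Hh; rewrite /clampR /Rmax /Rmin.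
case: (Rle_dec h d) => H1; case: (Rle_dec h' d) => H2; case: (Rle_dec c h) => H3;
  case: (Rle_dec c h') => H4; try case: (Rle_dec c d) => H5; lra.
Qed.

Lemma inv_exists (f : R -> R) : continuity f ->
  (forall a b, 0 <= a -> a < b -> b <= 1 -> f a < f b) ->
  exists G, continuity G /\ forall h, f 0 <= h <= f 1 -> 0 <= G h <= 1 /\ f (G h) = h.
Proof.
move=> Hf Hm.
have f01 : f 0 < f 1 by apply: Hm; lra.
have Hex : forall h, exists a, 0 <= a <= 1 /\ f a = clampR (f 0) (f 1) h.
  move=> h; have [[Hc1 Hc2] _] := clampR_spec h f01.
  case: (Rle_lt_or_eq_dec _ _ Hc1) => Hc1'; last by exists 0; split; [lra|exact Hc1'].
  case: (Rle_lt_or_eq_dec _ _ Hc2) => Hc2'; last by exists 1; split; [lra|rewrite Hc2'].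
  have Hcont : continuity (fun a => f a - clampR (f 0) (f 1) h).
    apply: continuity_minus => //; apply: continuity_const => ? ?; done.
  have Hlo : (fun a => f a - clampR (f 0) (f 1) h) 0 < 0 by rewrite /=; lra.
  have Hhi : 0 < (fun a => f a - clampR (f 0) (f 1) h) 1 by rewrite /=; lra.
  have [a [Ha Hfa]] := IVT (fun a => f a - clampR (f 0) (f 1) h) 0 1 Hcont Rlt_0_1 Hlo Hhi.
  exists a; split => //; move: Hfa; rewrite /=; lra.
pose G h := proj1_sig (constructive_indefinite_description _ (Hex h)).
have HG : forall h, 0 <= G h <= 1 /\ f (G h) = clampR (f 0) (f 1) h.
  move=> h; exact: (proj2_sig (constructive_indefinite_description _ (Hex h))).
have finj : forall a b, 0 <= a <= 1 -> 0 <= b <= 1 -> f a = f b -> a = b.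
  move=> a b Ha Hb Hab; case: (Rtotal_order a b) => [h|[h|h]] //.
  - have := Hm a b ltac:(lra) h ltac:(lra); lra.
  - have := Hm b a ltac:(lra) h ltac:(lra); lra.
have mono : forall h h', h <= h' -> G h <= G h'.
  move=> h h' Hh; apply: Rnot_lt_le => Hlt.
  have [Ha Hfa] := HG h; have [Ha' Hfa'] := HG h'.
  have := Hm (G h') (G h) ltac:(lra) Hlt ltac:(lra).
  have := clampR_mono f01 Hh; lra.
have Gf : forall a, 0 < a < 1 -> G (f a) = a.
  move=> a Ha; have [HGa HfGa] := HG (f a); apply: finj => //; first lra.
  rewrite HfGa; have [_ [_ [_ [H _]]]] := clampR_spec (f a) f01; apply: H.
  split; left; apply: Hm; lra.
exists G; split; last first.
  move=> h Hh; have [Ha Hfa] := HG h; split => //; rewrite Hfa.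
  have [_ [_ [_ [H _]]]] := clampR_spec h f01; exact: H.
move=> h0 eps Heps.
have [Ha0 Hfa0] := HG h0.
have lower : exists d, d > 0 /\ forall x, h0 - d < x -> G h0 - eps < G x.
  case: (Rle_dec (G h0 - eps / 2) 0) => Hl.
  - exists 1; split; [lra|] => x _; have := HG x; lra.
  - move/Rnot_le_lt: Hl => Hl. 
    have Hh0 : f 0 < h0.
      apply: Rnot_le_lt => Hh0.
      have [_ [H _]] := clampR_spec h0 f01; have := H Hh0; rewrite -Hfa0 => H'.
      have := finj (G h0) _ Ha0 (conj (Rle_refl 0) Rle_0_1) H'; lra.
    have Hfl : f (G h0 - eps / 2) < h0.
      have := Hm (G h0 - eps / 2) (G h0) ltac:(lra) ltac:(lra) ltac:(lra).
      have [_ [_ [_ [_ [H _]]]]] := clampR_spec h0 f01; have := H Hh0; lra.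
    exists (h0 - f (G h0 - eps / 2)); split; [lra|] => x Hx.
    have := mono (f (G h0 - eps / 2)) x ltac:(lra); rewrite Gf; [lra|lra].
have upper : exists d, d > 0 /\ forall x, x < h0 + d -> G x < G h0 + eps.
  case: (Rle_dec 1 (G h0 + eps / 2)) => Hl.
  - exists 1; split; [lra|] => x _; have := HG x; lra.
  - move/Rnot_le_lt: Hl => Hl. 
    have Hh0 : h0 < f 1.
      apply: Rnot_le_lt => Hh0.
      have [_ [_ [H _]]] := clampR_spec h0 f01; have := H Hh0; rewrite -Hfa0 => H'.
      have := finj (G h0) 1 Ha0 (conj Rle_0_1 (Rle_refl 1)) H'; lra.
    have Hfu : h0 < f (G h0 + eps / 2).
      have := Hm (G h0) (G h0 + eps / 2) ltac:(lra) ltac:(lra) ltac:(lra).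
      have [_ [_ [_ [_ [_ H]]]]] := clampR_spec h0 f01; have := H Hh0; lra.
    exists (f (G h0 + eps / 2) - h0); split; [lra|] => x Hx.
    have := mono x (f (G h0 + eps / 2)) ltac:(lra); rewrite Gf; [lra|lra].
have [d1 [Hd1 H1]] := lower; have [d2 [Hd2 H2]] := upper.
exists (Rmin d1 d2); split; first by apply: Rmin_pos.
move=> x [_ Hx]; rewrite /R_dist in Hx *; simpl in Hx |- *; rewrite /R_dist in Hx |- *.
have Hm1 := Rmin_l d1 d2; have Hm2 := Rmin_r d1 d2.
move: Hx; rewrite /Rabs; case: (Rcase_abs (x - h0)) => Hs Hx.
- have := H1 x ltac:(lra); have := H2 x ltac:(lra).
  case: (Rcase_abs (G x - G h0)) => Hs'; lra.
- have := H1 x ltac:(lra); have := H2 x ltac:(lra).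
  case: (Rcase_abs (G x - G h0)) => Hs'; lra.
Qed.

Lemma cont_min_comp (f : R -> R) c : continuity f -> continuity (fun h => f (Rmin h c)).
Proof.
move=> Hf.
have -> : (fun h => f (Rmin h c)) = (fun h => f ((h + c - Rabs (h - c)) / 2)).
  apply: FunctionalExtensionality.functional_extensionality => h; congr f.
  rewrite /Rmin /Rabs; case: (Rle_dec h c) => H; case: (Rcase_abs (h - c)) => H'; lra.
apply: (continuity_comp (fun h => (h + c - Rabs (h - c)) / 2) f) => //.
apply: continuity_mult; last by apply: continuity_const => ? ?.
apply: continuity_minus; first by apply: continuity_plus; [exact: (derivable_continuous _ derivable_id)|apply: continuity_const => ? ?].
apply: (continuity_comp (fun h => h - c) Rabs); last exact: Rcontinuity_abs.
by apply: continuity_minus; [exact: (derivable_continuous _ derivable_id)|apply: continuity_const => ? ?].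
Qed.

Lemma cont_max_comp (f : R -> R) c : continuity f -> continuity (fun h => f (Rmax h c)).
Proof.
move=> Hf.
have -> : (fun h => f (Rmax h c)) = (fun h => f ((h + c + Rabs (h - c)) / 2)).
  apply: FunctionalExtensionality.functional_extensionality => h; congr f.
  rewrite /Rmax /Rabs; case: (Rle_dec h c) => H; case: (Rcase_abs (h - c)) => H'; lra.
apply: (continuity_comp (fun h => (h + c + Rabs (h - c)) / 2) f) => //.
apply: continuity_mult; last by apply: continuity_const => ? ?.
apply: continuity_plus; first by apply: continuity_plus; [exact: (derivable_continuous _ derivable_id)|apply: continuity_const => ? ?].
apply: (continuity_comp (fun h => h - c) Rabs); last exact: Rcontinuity_abs.
by apply: continuity_minus; [exact: (derivable_continuous _ derivable_id)|apply: continuity_const => ? ?].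
Qed.

Lemma edge_X (V : finType) (E : rel V) pos crv (Hd : upward_planar_drawing E pos crv) x y :
  E x y -> exists X, continuity X /\ forall h, snd (pos x) <= h <= snd (pos y) ->
    exists a, in01 a /\ crv x y a = (X h, h).
Proof.
move=> Exy; have [H0 [H1 [Hcs [Hcf Hm]]]] := dr_edge Hd Exy.
have [G [HGc HG]] := inv_exists Hcs Hm.
exists (fun h => fst (crv x y (G h))); split.
  exact: (continuity_comp G (fun b => fst (crv x y b))).
move=> h Hh; rewrite -H0 -H1 in Hh; have [Ha Hf] := HG h Hh.
exists (G h); split => //; apply: injective_projections => //=.
Qed.

Lemma path_X (V : finType) (E : rel V) pos crv (Hd : upward_planar_drawing E pos crv) s p :
  path E s p -> exists X, continuity X /\ forall h, snd (pos s) <= h <= snd (pos (last s p)) ->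
    path_pts pos crv s p (X h, h).
Proof.
elim: p s => [|v p IH] s.
  move=> _; exists (fun _ => fst (pos s)); split; first by apply: continuity_const => ? ?.
  move=> h /= Hh; have -> : h = snd (pos s) by lra.
  by rewrite -surjective_pairing.
rewrite /= => /andP [Esv Hp].
have [Xe [Hce He]] := edge_X Hd Esv.
have [Xr [Hcr Hr]] := IH v Hp.
have Hlast := last_Yle Hd Hp.
have Hsv := edge_lt Hd Esv.
have HXe : (Xe (snd (pos v)), snd (pos v)) = pos v.
  have [a [Ha Hea]] := He (snd (pos v)) ltac:(lra).
  have [_ [H1 _]] := dr_edge Hd Esv.
  have Ha1 : a = 1.
    apply: (edge_inj Hd Esv Ha); first (split; lra). by rewrite Hea H1.
  by rewrite -Hea Ha1.
have HXr : (Xr (snd (pos v)), snd (pos v)) = pos v.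
  apply: (pts_at_start Hd Hp) => //; apply: Hr; lra.
have Heq : Xe (snd (pos v)) = Xr (snd (pos v)).
  by have := f_equal fst (etrans HXe (esym HXr)).
exists (fun h => Xe (Rmin h (snd (pos v))) + Xr (Rmax h (snd (pos v))) - Xe (snd (pos v))).
split.
  apply: continuity_minus; last by apply: continuity_const => ? ?.
  by apply: continuity_plus; [exact: cont_min_comp|exact: cont_max_comp].
move=> h Hh.
case: (Rle_dec h (snd (pos v))) => Hhv.
- rewrite Rmin_left // Rmax_right // Heq.
  have -> : Xe h + Xr (snd (pos v)) - Xr (snd (pos v)) = Xe h by ring.
  left; have [a [Ha Hea]] := He h ltac:(lra); by exists a.
- rewrite Rmin_right; last lra. rewrite Rmax_left; last lra.
  have -> : Xe (snd (pos v)) + Xr h - Xe (snd (pos v)) = Xr h by ring.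
  right; apply: Hr; lra.
Qed.

Definition geP (A B : point -> Prop) :=
  forall z w, A z -> B w -> snd z = snd w -> fst w <= fst z.

Lemma geP_refl (V : finType) (E : rel V) pos crv (Hd : upward_planar_drawing E pos crv) s p :
  path E s p -> geP (path_pts pos crv s p) (path_pts pos crv s p).
Proof. move=> Hp z w Hz Hw Hh; rewrite (pts_uniq Hd Hp Hz Hw Hh); lra. Qed.

Lemma head_seg (V : finType) (E : rel V) pos crv (Hd : upward_planar_drawing E pos crv) s A p1 y p2 :
  path E s A -> s :: A = p1 ++ s :: y :: p2 -> A = y :: p2.
Proof.
case: p1 => [|u p1] Hp /=; first by case.
case=> _ HA; have Hs : s \in A by rewrite HA mem_cat in_cons eqxx orbT.
have := path_Ylt Hd Hp Hs; lra.
Qed.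

Lemma tail_single (V : finType) (E : rel V) pos crv (Hd : upward_planar_drawing E pos crv) s c p2 :
  path E s (c :: p2) -> last s (c :: p2) = c -> p2 = [::].
Proof.
case: p2 => [|u p2] //= /andP [_ Hp] Hl.
have := @last_Ylt _ _ _ _ Hd c (u :: p2) Hp ltac:(done); rewrite /= Hl; lra.
Qed.

Lemma seg (V : finType) (E : rel V) pos crv (Hd : upward_planar_drawing E pos crv) s A B c :
  path E s A -> path E s B -> last s A = c -> last s B = c -> A <> [::] -> B <> [::] ->
  (forall w, w \in s :: A -> w \in s :: B -> w = s \/ w = c) ->
  geP (path_pts pos crv s A) (path_pts pos crv s B) \/
  geP (path_pts pos crv s B) (path_pts pos crv s A).
Proof.
move=> HA HB HlA HlB HA0 HB0 Hcv.
case: (classic (geP (path_pts pos crv s A) (path_pts pos crv s B))) => H1; first by left.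
right; apply: NNPP => H2; apply: H1 => z1 w1 Hz1 Hw1 Hh1; apply: Rnot_lt_le => Hlt1.
apply: H2 => z2 w2 Hz2 Hw2 Hh2; apply: Rnot_lt_le => Hlt2.
have Hsc : snd (pos s) < snd (pos c) by rewrite -HlA; exact: (last_Ylt Hd HA HA0).
have inner : forall z w, path_pts pos crv s A z -> path_pts pos crv s B w -> snd z = snd w ->
    fst z <> fst w -> snd (pos s) < snd z < snd (pos c).
  move=> z w Hz Hw Hh Hne.
  have := pts_height Hd HA Hz; rewrite HlA => [[Hz1' Hz2']].
  split.
  - case: (Rle_lt_or_eq_dec _ _ Hz1') => // Heq; exfalso; apply: Hne.
    by rewrite (pts_at_start Hd HA Hz (esym Heq)) (pts_at_start Hd HB Hw ltac:(rewrite -Hh; auto)).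
  - case: (Rle_lt_or_eq_dec _ _ Hz2') => // Heq; exfalso; apply: Hne.
    have Hw' : snd w = snd (pos (last s B)) by rewrite HlB -Hh.
    have Hz' : snd z = snd (pos (last s A)) by rewrite HlA.
    by rewrite (pts_at_end Hd HA Hz Hz') (pts_at_end Hd HB Hw Hw') HlA HlB.
have [Hi1 Hi1'] := inner z1 w1 Hz1 Hw1 Hh1 ltac:(lra).
have [Hi2 Hi2'] := inner w2 z2 Hw2 Hz2 ltac:(auto) ltac:(lra).
have [XA [HcA HXA]] := path_X Hd HA; have [XB [HcB HXB]] := path_X Hd HB.
rewrite HlA in HXA; rewrite HlB in HXB.
have Ez1 : z1 = (XA (snd z1), snd z1).
  apply: (pts_uniq Hd HA Hz1 (HXA (snd z1) ltac:(lra))) => //.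
have Ew1 : w1 = (XB (snd z1), snd z1).
  apply: (pts_uniq Hd HB Hw1 (HXB (snd z1) ltac:(lra))); by rewrite Hh1.
have Ew2 : w2 = (XA (snd w2), snd w2).
  apply: (pts_uniq Hd HA Hw2 (HXA (snd w2) ltac:(lra))) => //.
have Ez2 : z2 = (XB (snd w2), snd w2).
  apply: (pts_uniq Hd HB Hz2 (HXB (snd w2) ltac:(lra))); by rewrite -Hh2.
rewrite Ez1 Ew1 /= in Hlt1; rewrite Ez2 Ew2 /= in Hlt2.
have [h [[Hh1' Hh2'] HXh]] : exists h, (snd (pos s) < h < snd (pos c)) /\ XA h = XB h.
  case: (Rtotal_order (snd z1) (snd w2)) => [Hlt|[Heq|Hlt]].
  - have Hc : continuity (fun h => XA h - XB h) by apply: continuity_minus.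
    have [h [Hh Hf]] := IVT _ _ _ Hc Hlt ltac:(lra) ltac:(lra).
    exists h; split; [lra|lra].
  - rewrite Heq in Hlt1; lra.
  - have Hc : continuity (fun h => XB h - XA h) by apply: continuity_minus.
    have [h [Hh Hf]] := IVT _ _ _ Hc Hlt ltac:(lra) ltac:(lra).
    exists h; split; [lra|lra].
have HzA := HXA h ltac:(lra).
have HzB := HXB h ltac:(lra); rewrite -HXh in HzB.
have [x [y [a [p1 [p2 [Hpa [Exy [Ha Hza]]]]]]]] := pts_edge Hd HA HzA HA0.
have [x' [y' [b [q1 [q2 [Hqb [Exy' [Hb Hzb]]]]]]]] := pts_edge Hd HB HzB HB0.
have memA : x \in s :: A /\ y \in s :: A.
  by rewrite Hpa !(mem_cat, in_cons) !eqxx !orbT.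
have memB : x' \in s :: B /\ y' \in s :: B.
  by rewrite Hqb !(mem_cat, in_cons) !eqxx !orbT.
case: (classic ((x, y) = (x', y'))) => Hxy.
- case: Hxy => Hx Hy; subst x' y'.
  have Hxy := edge_lt Hd Exy.
  have [Hx|Hx] := Hcv x (proj1 memA) (proj1 memB);
  have [Hy|Hy] := Hcv y (proj2 memA) (proj2 memB); rewrite ?Hx ?Hy in Hxy; try lra.
  rewrite Hx Hy in Hpa Hqb.
  have HA1 := head_seg Hd HA Hpa; have HB1 := head_seg Hd HB Hqb.
  rewrite HA1 in HA HlA; rewrite HB1 in HB HlB.
  have Hp2 := tail_single Hd HA HlA; have Hq2 := tail_single Hd HB HlB.
  have HAB : A = B by rewrite HA1 HB1 Hp2 Hq2.
  rewrite HAB in Hz1; rewrite Hq2 in HB.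
  rewrite HB1 Hq2 in Hz1 Hw1.
  move: (f_equal fst (pts_uniq Hd HB Hz1 Hw1 Hh1)); rewrite Ez1 Ew1 /=; lra.
- case: Hd => _ [_ [_ Hpl]].
  have [w [Hw [Hw1' Hw2']]] := Hpl x y x' y' a b Exy Exy' Hxy Ha Hb (etrans (esym Hza) Hzb).
  have HwA : w \in s :: A by case: Hw1' => ->; [exact: (proj1 memA)|exact: (proj2 memA)].
  have HwB : w \in s :: B by case: Hw2' => ->; [exact: (proj1 memB)|exact: (proj2 memB)].
  have Hhw : h = snd (pos w) by rewrite -Hw -Hza.
  by case: (Hcv w HwA HwB) => Hw0; subst w; lra.
Qed.

Lemma ge_cat (V : finType) (E : rel V) pos crv (Hd : upward_planar_drawing E pos crv) s c S A M P :
  path E s S -> path E s A -> last s S = c -> last s A = c -> path E c M -> path E c P ->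
  geP (path_pts pos crv s S) (path_pts pos crv s A) ->
  geP (path_pts pos crv c M) (path_pts pos crv c P) ->
  geP (path_pts pos crv s (S ++ M)) (path_pts pos crv s (A ++ P)).
Proof.
move=> HS HA HlS HlA HM HP G1 G2 z w Hz Hw Hh.
have HSM : path E s (S ++ M) by rewrite cat_path HS HlS HM.
have HAP : path E s (A ++ P) by rewrite cat_path HA HlA HP.
move/(pts_cat Hd z HSM): Hz; move/(pts_cat Hd w HAP): Hw; rewrite HlS HlA.
move=> [Hw|Hw] [Hz|Hz].
- exact: G1.
- have := pts_height Hd HA Hw; have := pts_height Hd HM Hz; rewrite HlA => H1 H2.
  have Hw' : snd w = snd (pos (last s A)) by rewrite HlA; lra.
  have Hz' : snd z = snd (pos c) by lra.
  rewrite (pts_at_end Hd HA Hw Hw') (pts_at_start Hd HM Hz Hz') HlA; lra.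
- have := pts_height Hd HS Hz; have := pts_height Hd HP Hw; rewrite HlS => H1 H2.
  have Hz' : snd z = snd (pos (last s S)) by rewrite HlS; lra.
  have Hw' : snd w = snd (pos c) by lra.
  rewrite (pts_at_end Hd HS Hz Hz') (pts_at_start Hd HP Hw Hw') HlS; lra.
- exact: G2.
Qed.

Lemma take_find_notin (T : eqType) (a : pred T) (s : seq T) v :
  v \in take (find a s) s -> ~~ a v.
Proof.
elim: s => [|x s IH] //=.
case Hx: (a x) => //=; rewrite in_cons => /orP [/eqP ->|Hv]; [by rewrite Hx|exact: IH].
Qed.

Lemma maxnil (V : finType) (E : rel V) pos crv (Hd : upward_planar_drawing E pos crv) s q :
  path E s q -> last s [::] = last s q -> q = [::].
Proof.
case: q => [|v q] // Hq Hl; have := last_Ylt Hd Hq ltac:(done); rewrite -Hl /=; lra.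
Qed.

Lemma maxp (V : finType) (E : rel V) pos crv (Hd : upward_planar_drawing E pos crv) n s p q :
  (size p <= n)%N -> path E s p -> path E s q -> last s p = last s q ->
  exists m, path E s m /\ last s m = last s p /\
    geP (path_pts pos crv s m) (path_pts pos crv s p) /\
    geP (path_pts pos crv s m) (path_pts pos crv s q).
Proof.
elim: n s p q => [|n IH] s p q Hsz Hp Hq Hl.
  case: p Hsz Hp Hl => [|v p] // _ Hp Hl.
  have Hq0 := maxnil Hd Hq Hl; subst q.
  exists [::]; split => //; split => //; split; exact: (geP_refl Hd Hp).
case: p Hsz Hp Hl => [|v0 p0] Hsz Hp Hl.
  have Hq0 := maxnil Hd Hq Hl; subst q.
  exists [::]; split => //; split => //; split; exact: (geP_refl Hd Hp).
set p := v0 :: p0 in Hsz Hp Hl *.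
have Hp0 : p <> [::] by [].
have Hq0 : q <> [::] by move=> Hq0; subst q; have := last_Ylt Hd Hp Hp0; rewrite Hl /=; lra.
have Htp : last s p \in p by rewrite /p /= mem_last.
have Htq : last s p \in q by case: q Hq Hl Hq0 => [|w q] // _ -> _; rewrite /= mem_last.
have Hhas : has (fun v => v \in q) p by apply/hasP; exists (last s p).
set i := find (fun v => v \in q) p.
have Hi : (i < size p)%N by rewrite /i -has_find.
set c := nth s p i.
have Hcq : c \in q by exact: (nth_find s Hhas).
set p1 := take i p; set p2 := drop i.+1 p.
have Hpdec : p = rcons p1 c ++ p2 by rewrite cat_rcons /p1 /p2 /c -drop_nth // cat_take_drop.
set j := index c q.
have Hj : (j < size q)%N by rewrite /j index_mem.
set q1 := take j q; set q2 := drop j.+1 q.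
have Hqdec : q = rcons q1 c ++ q2.
  have Hnth : nth s q j = c by exact: nth_index.
  by rewrite cat_rcons /q1 /q2 -{1}Hnth -drop_nth // cat_take_drop.
have Hp1 : forall v, v \in p1 -> v \notin q by move=> v Hv; exact: (take_find_notin Hv).
have HP := Hp; rewrite Hpdec cat_path last_rcons in HP; case/andP: HP => HA HP2.
have HQ := Hq; rewrite Hqdec cat_path last_rcons in HQ; case/andP: HQ => HB HQ2.
have Hl2 : last c p2 = last c q2.
  by move: Hl; rewrite Hpdec Hqdec !last_cat !last_rcons.
have Hlp : last c p2 = last s p by rewrite Hpdec last_cat last_rcons.
have Hsz2 : (size p2 <= n)%N.
  by rewrite /p2 size_drop; apply: leq_trans (leq_sub2r i.+1 Hsz) _; rewrite subSS leq_subr.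
have [m2 [Hm2 [Hlm2 [Gm2p Gm2q]]]] := IH c p2 q2 Hsz2 HP2 HQ2 Hl2.
have Hcv : forall w, w \in s :: rcons p1 c -> w \in s :: rcons q1 c -> w = s \/ w = c.
  move=> w; rewrite !in_cons !mem_rcons !in_cons => /orP [/eqP ->|/orP [/eqP ->|Hw]]; first by left.
  - by right.
  - move=> /orP [/eqP ->|/orP [/eqP Hwc|Hw']]; first by left.
    + by move: (Hp1 w Hw); rewrite Hwc Hcq.
    + by move: (Hp1 w Hw); rewrite (mem_take Hw').
have Hseg := seg Hd HA HB (last_rcons s p1 c) (last_rcons s q1 c)
  ltac:(by move=> H0; have := f_equal size H0; rewrite size_rcons) ltac:(by move=> H0; have := f_equal size H0; rewrite size_rcons) Hcv.
have [S [HS [HlS [GSA GSB]]]] : exists S, path E s S /\ last s S = c /\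
    geP (path_pts pos crv s S) (path_pts pos crv s (rcons p1 c)) /\
    geP (path_pts pos crv s S) (path_pts pos crv s (rcons q1 c)).
  case: Hseg => G.
  - exists (rcons p1 c); split => //; split; [exact: last_rcons|split => //]; exact: (geP_refl Hd HA).
  - exists (rcons q1 c); split => //; split; [exact: last_rcons|split => //]; exact: (geP_refl Hd HB).
exists (S ++ m2); split; first by rewrite cat_path HS HlS Hm2.
split; first by rewrite last_cat HlS Hlm2 Hlp.
split.
- rewrite Hpdec; apply: (ge_cat Hd HS HA HlS (last_rcons s p1 c) Hm2 HP2 GSA Gm2p).
- rewrite Hqdec; apply: (ge_cat Hd HS HB HlS (last_rcons s q1 c) Hm2 HQ2 GSB Gm2q).
Qed.

Fixpoint allseq (V : finType) (n : nat) : seq (seq V) :=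
  if n is n'.+1 then [::] :: [seq x :: r | x <- enum V, r <- allseq V n'] else [:: [::]].

Lemma allseqP (V : finType) n (r : seq V) : (size r <= n)%N -> r \in allseq V n.
Proof.
elim: n r => [|n IH] [|x r] //= Hs.
rewrite in_cons; apply/orP; right; apply: allpairs_f; [exact: mem_enum|exact: IH].
Qed.

Lemma geP_trans (V : finType) (E : rel V) pos crv (Hd : upward_planar_drawing E pos crv) s B C A :
  path E s B -> path E s C -> last s B = last s C ->
  geP A (path_pts pos crv s B) -> geP (path_pts pos crv s B) (path_pts pos crv s C) ->
  geP A (path_pts pos crv s C).
Proof.
move=> HB HC Hl G1 G2 z w Hz Hw Hh.
have [XB [_ HXB]] := path_X Hd HB.
have Hr := pts_height Hd HC Hw.
have Hb := HXB (snd w) ltac:(rewrite Hl; lra).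
have := G2 _ _ Hb Hw erefl; have := G1 _ _ Hz Hb Hh => /=; lra.
Qed.

Lemma listmax (V : finType) (E : rel V) pos crv (Hd : upward_planar_drawing E pos crv) s t p0
    (L : seq (seq V)) :
  path E s p0 -> last s p0 = t ->
  exists m, path E s m /\ last s m = t /\
    forall q, q \in L -> path E s q -> last s q = t ->
      geP (path_pts pos crv s m) (path_pts pos crv s q).
Proof.
move=> Hp0 Hl0; elim: L => [|q L [m [Hm [Hlm HL]]]].
  by exists p0; split => //; split.
case: (classic (path E s q /\ last s q = t)) => [[Hq Hlq]|Hq].
- have [m' [Hm' [Hlm' [G1 G2]]]] := maxp Hd (leqnn (size m)) Hm Hq (etrans Hlm (esym Hlq)).
  exists m'; split => //; split; first by rewrite Hlm'.
  move=> q'; rewrite in_cons => /orP [/eqP ->|Hq'] // Hpq' Hlq'.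
  apply: (geP_trans Hd Hm Hpq' _ G1 (HL q' Hq' Hpq' Hlq')); by rewrite Hlm Hlq'.
- exists m; split => //; split => //.
  move=> q'; rewrite in_cons => /orP [/eqP ->|Hq'] Hpq' Hlq'; first by exfalso; apply: Hq.
  exact: HL.
Qed.

Lemma right_of_ge (V : finType) (E : rel V) pos crv (Hd : upward_planar_drawing E pos crv) s t m q :
  path E s m -> last s m = t -> path E s q -> last s q = t ->
  geP (path_pts pos crv s m) (path_pts pos crv s q) ->
  forall z, path_pts pos crv s m z ->
    path_pts pos crv s q z \/ Right_path pos crv s t q z.
Proof.
move=> Hm Hlm Hq Hlq G z Hz.
have := pts_height Hd Hm Hz; rewrite Hlm => Hr.
have [XQ [_ HXQ]] := path_X Hd Hq; rewrite Hlq in HXQ.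
have Hw := HXQ (snd z) Hr.
have Hle := G _ _ Hz Hw erefl; simpl in Hle.
case: (Rle_lt_or_eq_dec _ _ Hle) => Hlt.
- right; split.
  + rewrite Rmin_left; last lra. rewrite Rmax_right; last lra. exact: Hr.
  + move=> u' Hu'; have := pts_uniq Hd Hq Hu' Hw erefl; case=> ->; exact: Hlt.
- left; have -> : z = (XQ (snd z), snd z) by rewrite Hlt -surjective_pairing.
  exact: Hw.
Qed.

Lemma rm_sub (V : finType) (E : rel V) pos crv (Hd : upward_planar_drawing E pos crv) s t p q :
  path E s p -> last s p = t -> path E s q -> last s q = t ->
  (forall z, path_pts pos crv s p z -> path_pts pos crv s q z \/ Right_path pos crv s t q z) ->
  (forall z, path_pts pos crv s q z -> path_pts pos crv s p z \/ Right_path pos crv s t p z) ->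
  forall z, path_pts pos crv s p z -> path_pts pos crv s q z.
Proof.
move=> Hp Hlp Hq Hlq R1 R2 z Hz.
case: (R1 z Hz) => // [[Hr Hlt]].
have Hst : snd (pos s) <= snd (pos t) by rewrite -Hlp; exact: (last_Yle Hd Hp).
rewrite Rmin_left in Hr; last lra. rewrite Rmax_right in Hr; last lra.
have [XQ [_ HXQ]] := path_X Hd Hq; rewrite Hlq in HXQ.
have Hw := HXQ (snd z) Hr.
have H1 := Hlt _ Hw.
case: (R2 _ Hw) => [Hw'|[_ Hlt']].
- have := pts_uniq Hd Hp Hz Hw' erefl => Heq; rewrite {2}Heq /= in H1; lra.
- have := Hlt' (fst z) ltac:(by rewrite -surjective_pairing) => /=; lra.
Qed.

Lemma vert_on_edge (V : finType) (E : rel V) pos crv (Hd : upward_planar_drawing E pos crv) s w v a :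
  E s w -> in01 a -> crv s w a = pos v -> snd (pos s) < snd (pos v) -> v = w.
Proof.
move=> Esw [Ha1 Ha2] He Hsv.
have [H0 [H1 _]] := dr_edge Hd Esw.
have [Hinj [_ [Hint _]]] := Hd.
case: (Rle_lt_or_eq_dec _ _ Ha1) => Ha1'.
- case: (Rle_lt_or_eq_dec _ _ Ha2) => Ha2'.
  + by exfalso; apply: (Hint s w v a Esw (conj Ha1' Ha2') He).
  + by apply: Hinj; rewrite -He Ha2' H1.
- by exfalso; move: He; rewrite -Ha1' H0 => /Hinj Hvs; rewrite Hvs in Hsv; lra.
Qed.

Lemma eq_pts_seq (V : finType) (E : rel V) pos crv (Hd : upward_planar_drawing E pos crv) s p q :
  path E s p -> path E s q -> last s p = last s q ->
  (forall z, path_pts pos crv s p z -> path_pts pos crv s q z) ->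
  (forall z, path_pts pos crv s q z -> path_pts pos crv s p z) -> p = q.
Proof.
elim: p s q => [|v p IH] s q Hp Hq Hl S1 S2.
  by rewrite (maxnil Hd Hq Hl).
case: q Hq Hl S1 S2 => [|w q] Hq Hl S1 S2.
  by have := maxnil Hd Hp (esym Hl).
move: (Hp) (Hq) => /= /andP [Esv Hp'] /andP [Esw Hq'].
have Hv : path_pts pos crv s (v :: p) (pos v) by right; exact: (pts_start Hd Hp').
have Hw : path_pts pos crv s (w :: q) (pos w) by right; exact: (pts_start Hd Hq').
have Hsv := edge_lt Hd Esv; have Hsw := edge_lt Hd Esw.
have Hvw : v = w.
  case: (S1 _ Hv) => [[a [Ha He]]|Hv'].
    exact: (vert_on_edge Hd Esw Ha (esym He) Hsv).
  case: (S2 _ Hw) => [[a [Ha He]]|Hw'].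
    exact: esym (vert_on_edge Hd Esv Ha (esym He) Hsw).
  have := pts_height Hd Hq' Hv'; have := pts_height Hd Hp' Hw' => H1 H2.
  have [Hinj _] := Hd; apply: Hinj.
  apply: (pts_at_start Hd Hq' Hv'); lra.
subst w; congr cons.
apply: (IH v q Hp' Hq' Hl).
- move=> z Hz; case: (S1 z (or_intror Hz)) => // [[a [Ha He]]].
  have := edge_height Hd Esv Ha; have := pts_height Hd Hp' Hz; rewrite -He => H1 H2.
  rewrite (pts_at_start Hd Hp' Hz ltac:(lra)); exact: (pts_start Hd Hq').
- move=> z Hz; case: (S2 z (or_intror Hz)) => // [[a [Ha He]]].
  have := edge_height Hd Esv Ha; have := pts_height Hd Hq' Hz; rewrite -He => H1 H2.
  rewrite (pts_at_start Hd Hq' Hz ltac:(lra)); exact: (pts_start Hd Hp').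
Qed.

Theorem corollary1 (V : finType) (E : rel V)
    (pos : V -> point) (crv : V -> V -> R -> point) (s t : V) :
  upward_planar_drawing E pos crv ->
  (exists p, dipath E s t p) ->
  exists! p, rightmost E pos crv s t p.
Proof.
move=> Hd [p0 [Hp0 [Hl0 _]]].
have [m [Hm [Hlm HL]]] := listmax Hd (allseq V #|V|) Hp0 Hl0.
have Hrm : rightmost E pos crv s t m.
  split; first by split => //; split => //; exact: (path_uniq Hd Hm).
  move=> p' [Hp' [Hlp' Hu']].
  apply: (right_of_ge Hd Hm Hlm Hp' Hlp').
  apply: HL => //; apply: allseqP.
  have := max_card (mem (s :: p')); rewrite (card_uniqP Hu') /=; exact: ltnW.
exists m; split => // m' [[Hm' [Hlm' Hu']] Rm'].
have [[_ [_ _]] Rm] := Hrm.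
apply: (eq_pts_seq Hd Hm Hm'); first by rewrite Hlm Hlm'.
- apply: (rm_sub Hd Hm Hlm Hm' Hlm'); [apply: Rm|apply: Rm'];
    split => //; split => //; exact: (path_uniq Hd _).
- apply: (rm_sub Hd Hm' Hlm' Hm Hlm); [apply: Rm'|apply: Rm];
    split => //; split => //; exact: (path_uniq Hd _).
Qed.
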